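(* Let $\mathbb{K}\in\{\mathbb{R},\mathbb{C}\}$, set $c_{\mathbb{K}}=1$ if $\mathbb{K}=\mathbb{R}$ and $c_{\mathbb{K}}=2$ if $\mathbb{K}=\mathbb{C}$, let $d\ge 2$, and let $x_1,\dots,x_N\in\mathbb{K}^d\setminus\{0\}$. Let $\mathcal{HP}_d^+(\mathbb{K})$ be the set of positive definite (symmetric if $\mathbb{K}=\mathbb{R}$, Hermitian if $\mathbb{K}=\mathbb{C}$) $d\times d$ matrices of unit determinant, and define on it $$l(R)=-c_{\mathbb{K}}\,\frac{d-1}{2N}\sum_{n=1}^N \log\left(x_n^\dagger R^{-1}x_n\right).$$ If $R^\star\in\mathcal{HP}_d^+(\mathbb{K})$ maximizes $l$ over $\mathcal{HP}_d^+(\mathbb{K})$, then there exists a constant $c>0$ such that $$R^\star = c\sum_{n=1}^N \frac{x_n x_n^\dagger}{x_n^\dagger (R^\star)^{-1} x_n},$$ i.e. $R^\star$ is (a normalized version of) Tyler's fixed-point estimator. In the paper's interpretation, $l$ is, up to additive constants, the log-likelihood of $N$ i.i.d. samples under a real elliptically symmetric model (resp. a complex elliptically symmetric model, with the samples' circular symmetry taken into account) with correlation matrix $R$, maximized over all radial distributions; hence Tyler's estimator is a maximum likelihood estimate of the correlation matrix over all such models.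
   Context: $X^\dagger$ denotes the transpose of a real matrix/vector or the conjugate transpose of a complex one. A (real) elliptically symmetric distribution on $\mathbb{R}^d$ with correlation matrix $R$ (normalized by $|R|=1$) and radial distribution $Q$ (any probability measure on $\mathbb{R}_+$) is the law of $L(R)\,r\,u$ where $R=L(R)L(R)^\dagger$ is the Cholesky factorization, $r\sim Q$ and $u$ is independent of $r$ and uniform on the unit sphere of $\mathbb{R}^d$; complex elliptically symmetric distributions are defined identically on $\mathbb{C}^d$ with $u$ uniform on the unit sphere of $\mathbb{C}^d$. The paper defines the log-likelihood of a model $P$ for a sampling distribution $S$ as $-H(S|P)$ (minus the KL divergence), with a single sample $x_0$ represented by the Dirac mass at $x_0$ (in the complex case, by the Dirac mass on the phase orbit $\{ux_0: |u|=1\}$ averaged uniformly over phases), and derives that after maximizing over $Q$ the likelihood reduces, up to additive constants, to $l(R)$ above. *)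

(* Defs.v *)
From HB Require Import structures.
From mathcomp Require Import all_boot all_order all_algebra.
From mathcomp Require Import reals exp.
From mathcomp Require Import complex.

Set Implicit Arguments.
Unset Strict Implicit.
Unset Printing Implicit Defensive.

Import Order.TTheory GRing.Theory Num.Theory.
Local Open Scope ring_scope.

Definition cadj (R : realType) m n (A : 'M[R[i]]_(m, n)) : 'M[R[i]]_(n, m) :=
  map_mx (@conjc R) A^T.

Definition HPd_real (R : realType) d (A : 'M[R]_d) : Prop :=
  A^T = A /\ (forall x : 'cV[R]_d, x != 0 -> 0 < (x^T *m A *m x) 0 0) /\ \det A = 1.

Definition l_real (R : realType) d N (x : 'I_N -> 'cV[R]_d) (A : 'M[R]_d) : R :=
  - (1 * ((d - 1)%:R / (2 * N)%:R))
    * \sum_(n < N) ln (((x n)^T *m invmx A *m x n) 0 0).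

Definition HPd_cplx (R : realType) d (A : 'M[R[i]]_d) : Prop :=
  cadj A = A /\ (forall x : 'cV[R[i]]_d, x != 0 -> 0 < (cadj x *m A *m x) 0 0)
  /\ \det A = 1.

(* x^dagger R^-1 x is real (and > 0) for R in HP_d^+(C); we take its real part *)
Definition l_cplx (R : realType) d N (x : 'I_N -> 'cV[R[i]]_d) (A : 'M[R[i]]_d) : R :=
  - (2 * ((d - 1)%:R / (2 * N)%:R))
    * \sum_(n < N) ln (complex.Re ((cadj (x n) *m invmx A *m x n) 0 0)).

(* Main.v *)
Require Import Defs.
From HB Require Import structures.
From mathcomp Require Import all_boot all_order all_algebra.
From mathcomp Require Import reals exp.
From mathcomp Require Import complex.
From mathcomp Require Import ring lra.
Import Order.TTheory GRing.Theory Num.Theory.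
Set Implicit Arguments.
Unset Strict Implicit.
Unset Printing Implicit Defensive.
Local Open Scope ring_scope.

Section Gen.
Variables (R : realType) (F : numFieldType) (conj : {rmorphism F -> F}).
Hypothesis conjK : involutive conj.

Definition adj {m n} (A : 'M[F]_(m, n)) : 'M[F]_(n, m) := map_mx conj A^T.

Lemma adjM m n p (A : 'M[F]_(m, n)) (B : 'M_(n, p)) : adj (A *m B) = adj B *m adj A.
Proof. by rewrite /adj trmx_mul map_mxM. Qed.

Lemma adjK m n (A : 'M[F]_(m, n)) : adj (adj A) = A.
Proof. by apply/matrixP => i j; rewrite !mxE conjK. Qed.

Lemma adjD m n (A B : 'M[F]_(m, n)) : adj (A + B) = adj A + adj B.
Proof. by apply/matrixP => i j; rewrite !mxE rmorphD. Qed.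

Lemma adjZ m n a (A : 'M[F]_(m, n)) : adj (a *: A) = conj a *: adj A.
Proof. by apply/matrixP => i j; rewrite !mxE rmorphM. Qed.

Lemma adj11 (A : 'M[F]_1) : (adj A) 0 0 = conj (A 0 0).
Proof. by rewrite !mxE. Qed.

Lemma adj_inv n (A : 'M[F]_n) : adj (invmx A) = invmx (adj A).
Proof. by rewrite /adj trmx_inv map_invmx. Qed.

Lemma det_adj n (A : 'M[F]_n) : \det (adj A) = conj (\det A).
Proof. by rewrite /adj det_map_mx det_tr. Qed.

Definition herm {n} (A : 'M[F]_n) := adj A = A.
Definition pd {n} (A : 'M[F]_n) :=
  forall y : 'cV[F]_n, y != 0 -> 0 < (adj y *m A *m y) 0 0.
Definition Hd {n} (A : 'M[F]_n) := herm A /\ pd A /\ \det A = 1.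

Lemma unit_det1 n (A : 'M[F]_n) : \det A = 1 -> A \in unitmx.
Proof. by move=> h; rewrite unitmxE h unitr1. Qed.

Lemma mul_unit_neq0 n (A : 'M[F]_n) (y : 'cV_n) : A \in unitmx -> y != 0 -> A *m y != 0.
Proof.
move=> uA; apply: contra => /eqP h.
by rewrite -(mulKmx uA y) h mulmx0.
Qed.

Lemma pd_conj n (M E : 'M[F]_n) : pd M -> E \in unitmx -> pd (adj E *m M *m E).
Proof.
move=> pM uE y ny.
have := pM _ (mul_unit_neq0 uE ny).
by rewrite adjM !mulmxA.
Qed.

Lemma herm_conj n (M E : 'M[F]_n) : herm M -> herm (adj E *m M *m E).
Proof. by move=> hM; rewrite /herm !adjM adjK hM mulmxA. Qed.

Lemma herm_inv n (M : 'M[F]_n) : herm M -> herm (invmx M).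
Proof. by move=> hM; rewrite /herm adj_inv hM. Qed.

Lemma pd_inv n (M : 'M[F]_n) : herm M -> pd M -> M \in unitmx -> pd (invmx M).
Proof.
move=> hM pM uM y ny.
have uI : invmx M \in unitmx by rewrite unitmx_inv.
have := pM _ (mul_unit_neq0 uI ny).
rewrite adjM (herm_inv hM) !mulmxA mulmxKV //.
Qed.


Lemma det_1delta_lt n (i j : 'I_n) (c : F) : (j < i)%N -> \det (1%:M + c *: delta_mx i j) = 1.
Proof.
move=> ji; rewrite det_trig.
  rewrite big1 // => k _; rewrite !mxE eqxx /=.
  case: (k =P i) => [->|_]; last by rewrite mulr0 addr0.
  have -> : (i == j) = false by apply/negP => /eqP e; move: ji; rewrite e ltnn.
  by rewrite mulr0 addr0.
apply/is_trig_mxP => k l kl; rewrite !mxE.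
have -> : (k == l) = false by apply/negP => /eqP e; move: kl; rewrite e ltnn.
rewrite add0r.
case: (k =P i) => [ki|_] /=; last by rewrite mulr0.
case: (l =P j) => [lj|_] /=; last by rewrite mulr0.
by move: kl; rewrite ki lj => /(ltn_trans ji); rewrite ltnn.
Qed.

Lemma det_1delta n (i j : 'I_n) (c : F) : i != j -> \det (1%:M + c *: delta_mx i j) = 1.
Proof.
rewrite neq_ltn => /orP [ij|ji]; last exact: det_1delta_lt.
rewrite -det_tr linearD /= trmx1 linearZ /= trmx_delta.
exact: det_1delta_lt.
Qed.

Lemma det_conj_delta n (P : 'M[F]_n) (i j : 'I_n) (c : F) : P \in unitmx -> i != j ->
  \det (1%:M + c *: (P *m delta_mx i j *m invmx P)) = 1.
Proof.
move=> uP ij.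
have -> : 1%:M + c *: (P *m delta_mx i j *m invmx P) = P *m (1%:M + c *: delta_mx i j) *m invmx P.
  by rewrite mulmxDr mulmx1 mulmxDl mulmxV // -scalemxAr -scalemxAl.
rewrite !det_mulmx det_1delta // mulr1 det_inv mulfV //.
by rewrite -unitfE -unitmxE.
Qed.

Lemma tr_delta_mul n (i j : 'I_n) (M : 'M[F]_n) : \tr (delta_mx i j *m M) = M j i.
Proof.
rewrite /mxtrace (bigD1 i) //= big1 ?addr0.
  rewrite mxE (bigD1 j) //= big1 ?addr0; first by rewrite mxE !eqxx mul1r.
  by move=> l nlj; rewrite mxE eqxx (negbTE nlj) mul0r.
move=> k nki; rewrite mxE big1 // => l _.
by rewrite mxE (negbTE nki) mul0r.
Qed.

Lemma mul_delta_r n (i j : 'I_n) (M : 'M[F]_n) k l :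
  (M *m delta_mx i j) k l = M k i * (l == j)%:R.
Proof.
rewrite mxE (bigD1 i) //= big1 ?addr0; first by rewrite mxE eqxx.
by move=> m nmi; rewrite mxE (negbTE nmi) mulr0.
Qed.

Lemma mul_delta_l n (i j : 'I_n) (M : 'M[F]_n) k l :
  (delta_mx i j *m M) k l = (k == i)%:R * M j l.
Proof.
rewrite mxE (bigD1 j) //= big1 ?addr0; first by rewrite mxE eqxx andbT.
by move=> m nmj; rewrite mxE (negbTE nmj) andbF mul0r.
Qed.

Lemma entD m n (A B : 'M[F]_(m, n)) i j : (A + B) i j = A i j + B i j.
Proof. by rewrite mxE. Qed.
Lemma entB m n (A B : 'M[F]_(m, n)) i j : (A - B) i j = A i j - B i j.
Proof. by rewrite !mxE. Qed.
Lemma entZ m n a (A : 'M[F]_(m, n)) i j : (a *: A) i j = a * A i j.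
Proof. by rewrite mxE. Qed.

End Gen.

Lemma ln_sub_le (R : realType) (u v : R) : 0 < u -> 0 < v -> ln u - ln v <= u / v - 1.
Proof.
move=> u0 v0.
rewrite -ln_div ?posrE //.
have h : -1 < u / v - 1 by rewrite ltrBrDr addNr divr_gt0.
by have := le_ln1Dx h; rewrite addrC subrK.
Qed.

Lemma quad0 (R : realType) (al be : R) : 0 <= be ->
  (forall t, 0 <= t * (2 * al) + t ^+ 2 * be) -> al = 0.
Proof.
move=> be0 H.
have g : 0 < be + 1 by lra.
have g' : be + 1 != 0 by rewrite gt_eqF.
have := H (- al / (be + 1)).
have -> : - al / (be + 1) * (2 * al) + (- al / (be + 1)) ^+ 2 * be
   = - (al ^+ 2 * (be + 2) / (be + 1) ^+ 2).
  by field.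
rewrite oppr_ge0 => h.
have h2 : 0 <= al ^+ 2 * (be + 2) / (be + 1) ^+ 2.
  by apply: divr_ge0; [apply: mulr_ge0; [exact: sqr_ge0 | lra] | exact: sqr_ge0].
have h3 : al ^+ 2 * (be + 2) / (be + 1) ^+ 2 = 0 by apply/eqP; rewrite eq_le h h2.
move: h3 => /eqP; rewrite mulf_eq0 invr_eq0 expf_eq0 /= mulf_eq0 expf_eq0 /=.
have -> : (be + 2 == 0) = false by apply/negbTE; rewrite gt_eqF //; lra.
have -> : (be + 1 == 0) = false by apply/negbTE; rewrite gt_eqF.
by rewrite !orbF => /eqP.
Qed.

Section Main.
Variables (R : realType) (F : numFieldType) (conj : {rmorphism F -> F})
  (emb : {rmorphism R -> F}) (re : F -> R).
Hypotheses (conjK : involutive conj) (conj_emb : forall t, conj (emb t) = emb t)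
 (reD : forall a b, re (a + b) = re a + re b)
 (re_emb : forall t z, re (emb t * z) = t * re z)
 (re_conj : forall z, re (conj z) = re z)
 (re_ge0 : forall z, 0 <= z -> 0 <= re z)
 (re_pos : forall z, 0 < z -> 0 < re z)
 (emb_re : forall z, 0 < z -> emb (re z) = z)
 (re_nd : forall z, (forall s, re (s * z) = 0) -> z = 0).
Variables (d N : nat) (x : 'I_N -> 'cV[F]_d) (Rs : 'M[F]_d).
Hypotheses (d_gt0 : (0 < d)%N) (N_gt0 : (0 < N)%N) (xnz : forall n, x n != 0)
  (HRs : Hd conj Rs).

Local Notation adj := (adj conj).
Local Notation B := (invmx Rs).

Definition q (M : 'M[F]_d) (n : 'I_N) : F := (adj (x n) *m M *m x n) 0 0.

Hypothesis opt : forall A : 'M[F]_d, Hd conj A ->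
  \sum_n ln (re (q B n)) <= \sum_n ln (re (q (invmx A) n)).

Lemma uRs : Rs \in unitmx.
Proof. by case: HRs => _ [_ h]; exact: unit_det1. Qed.

Lemma hB : herm conj B.
Proof. by case: HRs => h _; exact: herm_inv. Qed.

Lemma pB : pd conj B.
Proof. by case: HRs => h [p _]; apply: pd_inv => //; exact: uRs. Qed.

Lemma detB : \det B = 1.
Proof. by case: HRs => _ [_ h]; rewrite det_inv h invr1. Qed.

Lemma opt2 (E : 'M[F]_d) : \det E = 1 ->
  \sum_n ln (re (q B n)) <= \sum_n ln (re (q (adj E *m B *m E) n)).
Proof.
move=> dE.
have uE := unit_det1 dE.
set M := adj E *m B *m E.
have hM : herm conj M by apply: herm_conj => //; exact: hB.
have pM : pd conj M by apply: pd_conj => //; exact: pB.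
have dM : \det M = 1 by rewrite !det_mulmx det_adj dE detB rmorph1 !mulr1.
have := opt (A := invmx M); rewrite invmxK; apply.
split; first exact: herm_inv.
split; first by apply: pd_inv => //; exact: unit_det1.
by rewrite det_inv dM invr1.
Qed.

Lemma qpos n : 0 < q B n.
Proof. exact: pB. Qed.

Definition Q n := re (q B n).
Lemma Qpos n : 0 < Q n.
Proof. exact/re_pos/qpos. Qed.
Lemma qQ n : q B n = emb (Q n).
Proof. by rewrite /Q emb_re // qpos. Qed.

Definition aK (K : 'M[F]_d) n := (adj (x n) *m B *m (K *m x n)) 0 0.
Definition bK (K : 'M[F]_d) n := (adj (K *m x n) *m B *m (K *m x n)) 0 0.

Lemma bK_ge0 K n : 0 <= bK K n.
Proof.
rewrite /bK; case: (eqVneq (K *m x n) 0) => [->|nz].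
  by rewrite mulmx0 mxE.
exact/ltW/pB.
Qed.

Lemma expand K t n :
  q (adj (1%:M + emb t *: K) *m B *m (1%:M + emb t *: K)) n
  = q B n + emb t * (aK K n + conj (aK K n)) + emb (t ^+ 2) * bK K n.
Proof.
rewrite /q.
have -> : adj (x n) *m (adj (1%:M + emb t *: K) *m B *m (1%:M + emb t *: K)) *m x n
   = adj ((1%:M + emb t *: K) *m x n) *m B *m ((1%:M + emb t *: K) *m x n).
  by rewrite adjM !mulmxA.
have -> : (1%:M + emb t *: K) *m x n = x n + emb t *: (K *m x n).
  by rewrite mulmxDl mul1mx scalemxAl.
rewrite adjD adjZ conj_emb.
have ca : conj (aK K n) = (adj (K *m x n) *m B *m x n) 0 0.
  rewrite /aK -(adj11 conj) !adjM adjK // hB mulmxA //.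
rewrite ca /aK /bK.
rewrite !(mulmxDl, mulmxDr) -!scalemxAl -!scalemxAr !entD !entZ rmorphXn.
ring.
Qed.

Lemma re_expand K t n :
  re (q (adj (1%:M + emb t *: K) *m B *m (1%:M + emb t *: K)) n)
  = Q n + t * (2 * re (aK K n)) + t ^+ 2 * re (bK K n).
Proof.
by rewrite expand !reD !re_emb reD re_conj /Q; ring.
Qed.

Lemma alpha0 K : (forall c, \det (1%:M + c *: K) = 1) ->
  \sum_n re (aK K n) / Q n = 0.
Proof.
move=> dK.
apply: (quad0 (be := \sum_n re (bK K n) / Q n)).
  by apply: sumr_ge0 => n _; apply: divr_ge0; [exact/re_ge0/bK_ge0 | exact/ltW/Qpos].
move=> t.
have := opt2 (dK (emb t)).
rewrite -subr_ge0 -sumrB => h.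
apply: (le_trans h).
have -> : t * (2 * \sum_n re (aK K n) / Q n) + t ^+ 2 * (\sum_n re (bK K n) / Q n)
  = \sum_n (re (q (adj (1%:M + emb t *: K) *m B *m (1%:M + emb t *: K)) n) / Q n - 1).
  rewrite !mulr_sumr -big_split /=; apply: eq_bigr => n _.
  rewrite re_expand.
  have := Qpos n; rewrite lt0r => /andP [Qn _].
  by field.
apply: ler_sum => n _; rewrite /Q; apply: ln_sub_le; last exact: Qpos.
apply: re_pos; apply: pd_conj => //.
  exact: pB.
exact: unit_det1.
Qed.


Definition T := \sum_n (q B n)^-1 *: (x n *m adj (x n) *m B).

Lemma re0 : re 0 = 0.
Proof. by apply: (addrI (re 0)); rewrite -reD !addr0. Qed.

Lemma re_sum I (r : seq I) (P : pred I) (f : I -> F) :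
  re (\sum_(i <- r | P i) f i) = \sum_(i <- r | P i) re (f i).
Proof. exact: (big_morph re reD re0). Qed.

Lemma tr_sum I (r : seq I) (P : pred I) (f : I -> 'M[F]_d) :
  \tr (\sum_(i <- r | P i) f i) = \sum_(i <- r | P i) \tr (f i).
Proof. exact: (big_morph _ (@mxtraceD _ _) (mxtrace0 _ _)). Qed.

Lemma trK1 (K : 'M[F]_d) n : \tr (K *m (x n *m adj (x n) *m B)) = aK K n.
Proof.
rewrite /aK -trace_mx11 !mulmxA mxtrace_mulC !mulmxA mxtrace_mulC !mulmxA.
by [].
Qed.

Lemma trKT K : re (\tr (K *m T)) = \sum_n re (aK K n) / Q n.
Proof.
rewrite /T mulmx_sumr tr_sum re_sum; apply: eq_bigr => n _.
by rewrite -scalemxAr mxtraceZ trK1 qQ -fmorphV re_emb mulrC.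
Qed.

Lemma tr_conj0 (P : 'M[F]_d) i j : P \in unitmx -> i != j ->
  (invmx P *m T *m P) j i = 0.
Proof.
move=> uP ij.
have h : \tr (P *m delta_mx i j *m invmx P *m T) = 0.
  apply: re_nd => s.
  have := alpha0 (K := s *: (P *m delta_mx i j *m invmx P)).
  rewrite -trKT -scalemxAl mxtraceZ; apply => c.
  by rewrite scalerA det_conj_delta.
rewrite -h -tr_delta_mul mxtrace_mulC.
rewrite -[X in \tr X = _]mulmxA (mxtrace_mulC (invmx P *m T)) !mulmxA //.
Qed.

Lemma T_off i j : i != j -> T j i = 0.
Proof.
move=> ij; have := tr_conj0 (P := 1%:M) (unitmx1 _ _) ij.
by rewrite invmx1 mul1mx mulmx1.
Qed.

Lemma T_diag a b : a != b -> T a a = T b b.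
Proof.
move=> ab.
set D := delta_mx a b : 'M[F]_d.
have hP : (1%:M + D) *m (1%:M - D) = 1%:M.
  rewrite mulmxDl mul1mx mulmxBr mulmx1 /D mul_delta_mx_cond eq_sym (negbTE ab).
  by rewrite mulr0n subr0 subrK.
have uP := (mulmx1_unit hP).1.
have iP : invmx (1%:M + D) = 1%:M - D.
  by have := mulKmx uP (1%:M - D); rewrite hP mulmx1.
have ba : b != a by rewrite eq_sym.
have := tr_conj0 uP ba; rewrite iP.
rewrite mulmxBl mul1mx mulmxDr mulmx1 /D entD mul_delta_r !entB !mul_delta_l.
rewrite !eqxx (T_off ab) (T_off ba) !mul1r mulr1.
by rewrite sub0r subr0 addrC => /eqP; rewrite subr_eq0 => /eqP.
Qed.

Let i0 : 'I_d := Ordinal d_gt0.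

Lemma T_scalar : T = (T i0 i0)%:M.
Proof.
apply/matrixP => i j; rewrite mxE.
case: (eqVneq i j) => [<-|ij]; last by rewrite mulr0n T_off // eq_sym.
rewrite mulr1n; case: (eqVneq i i0) => [->|ii0] //.
exact: T_diag.
Qed.

Lemma trT : \tr T = N%:R.
Proof.
rewrite /T tr_sum -[N in N%:R]card_ord -sumr_const; apply: eq_bigr => n _.
rewrite mxtraceZ -mulmxA mxtrace_mulC trace_mx11 -/(q B n) mulVf //.
by have := qpos n; rewrite lt0r => /andP [].
Qed.

Definition S := \sum_n (q B n)^-1 *: (x n *m adj (x n)).

Lemma final : exists2 c : R, 0 < c & Rs = emb c *: S.
Proof.
set lam := T i0 i0.
have hl : lam *+ d = N%:R by rewrite -trT [in RHS]T_scalar mxtrace_scalar.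
have dn0 : (d%:R : F) != 0 by rewrite pnatr_eq0 -lt0n.
have Nn0 : (N%:R : F) != 0 by rewrite pnatr_eq0 -lt0n.
have lamE : lam = N%:R / d%:R by rewrite -hl -mulr_natr mulfK.
have TS : T = S *m B.
  by rewrite /T /S mulmx_suml; apply: eq_bigr => n _; rewrite scalemxAl.
have SR : S = lam *: Rs.
  by rewrite -mul_scalar_mx -/lam -T_scalar TS -mulmxA mulVmx ?mulmx1 //; exact: uRs.
exists (d%:R / N%:R).
  by rewrite divr_gt0 // ltr0n.
rewrite SR scalerA fmorph_div !rmorph_nat lamE -[X in X * _]invf_div mulVf ?scale1r //.
by rewrite mulf_neq0 // invr_eq0.
Qed.

End Main.

Lemma adj_idE (R : realType) m n (A : 'M[R]_(m, n)) :
  adj (idfun : {rmorphism R -> R}) A = A^T.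
Proof. by rewrite /adj map_mx_id. Qed.

Lemma real_case (R : realType) (d N : nat) (hd : (2 <= d)%N) (hN : (0 < N)%N) :
  (forall (x : 'I_N -> 'cV[R]_d) (Rs : 'M[R]_d),
     (forall n, x n != 0) ->
     HPd_real Rs ->
     (forall A : 'M[R]_d, HPd_real A -> l_real x A <= l_real x Rs) ->
     exists2 c : R, 0 < c &
       Rs = c *: \sum_(n < N)
               ((((x n)^T *m invmx Rs *m x n) 0 0)^-1 *: (x n *m (x n)^T))).
Proof.
move=> x Rs xnz HR opt.
pose cj := (idfun : {rmorphism R -> R}).
have toHd A : HPd_real A -> Hd cj A.
  move=> [h1 [h2 h3]]; split; first by rewrite /herm adj_idE.
  by split => // y ny; rewrite adj_idE; exact: h2.
have qE M n : q cj x M n = ((x n)^T *m M *m x n) 0 0 by rewrite /q adj_idE.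
have d0 : (0 < d)%N by apply: leq_trans hd.
have := @final R R cj cj (fun z => z) (fun _ => erefl) (fun _ => erefl)
  (fun _ _ => erefl) (fun _ _ => erefl) (fun _ => erefl) (fun _ h => h) (fun _ h => h)
  (fun _ _ => erefl) _ d N x Rs d0 hN xnz (toHd _ _ HR).
case.
- by move=> z H; have := H 1; rewrite mul1r.
- move=> A HA.
  have hA : HPd_real A.
    case: HA => h1 [h2 h3]; split; first by rewrite /herm adj_idE in h1.
    split => // y ny; have := h2 y ny; by rewrite adj_idE.
  have := opt A hA; rewrite /l_real.
  have cpos : 0 < 1 * ((d - 1)%:R / (2 * N)%:R :> R).
    rewrite mul1r divr_gt0 // ltr0n ?muln_gt0 //.
    by rewrite subn_gt0.
  rewrite !mulNr lerN2 ler_pM2l //.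
  move=> h; under eq_bigr do rewrite qE.
  by under [X in _ <= X]eq_bigr do rewrite qE.
move=> c c0 e; exists c => //.
rewrite {1}e /S; congr (_ *: _); apply: eq_bigr => n _.
by rewrite qE adj_idE.
Qed.

Section Cplx.
Variable R : realType.
Local Open Scope complex_scope.

Lemma cReD (a b : R[i]) : complex.Re (a + b) = complex.Re a + complex.Re b.
Proof. by case: a; case: b. Qed.

Lemma cRe_emb (t : R) (z : R[i]) : complex.Re (t%:C * z) = t * complex.Re z.
Proof. by case: z => a b /=; rewrite mul0r subr0. Qed.

Lemma cRe_conj (z : R[i]) : complex.Re (z^*) = complex.Re z.
Proof. by case: z. Qed.

Lemma cRe_ge0 (z : R[i]) : 0 <= z -> 0 <= complex.Re z.
Proof. by rewrite lecE => /andP [_]. Qed.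

Lemma cRe_pos (z : R[i]) : 0 < z -> 0 < complex.Re z.
Proof. by rewrite ltcE => /andP [_]. Qed.

Lemma cemb_re (z : R[i]) : 0 < z -> (complex.Re z)%:C = z.
Proof. by case: z => a b; rewrite ltcE /= => /andP [/eqP -> _]. Qed.

Lemma cre_nd (z : R[i]) : (forall s, complex.Re (s * z) = 0) -> z = 0.
Proof.
case: z => a b H; have := H (a -i* b); rewrite /= => h.
have h' : a ^+ 2 + b ^+ 2 = 0 by rewrite -h; ring.
move/eqP: h'; rewrite paddr_eq0 ?sqr_ge0 // !sqrf_eq0 => /andP [/eqP -> /eqP ->].
by [].
Qed.
End Cplx.

Lemma cplx_case (R : realType) (d N : nat) (hd : (2 <= d)%N) (hN : (0 < N)%N) :
  (forall (x : 'I_N -> 'cV[R[i]]_d) (Rs : 'M[R[i]]_d),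
     (forall n, x n != 0) ->
     HPd_cplx Rs ->
     (forall A : 'M[R[i]]_d, HPd_cplx A -> l_cplx x A <= l_cplx x Rs) ->
     exists2 c : R, 0 < c &
       Rs = (c%:C)%C *: \sum_(n < N)
               (((cadj (x n) *m invmx Rs *m x n) 0 0)^-1 *: (x n *m cadj (x n)))).
Proof.
move=> x Rs xnz HR opt.
have d0 : (0 < d)%N by apply: leq_trans hd.
have := @final R R[i] (@conjc R) (real_complex R) (@complex.Re R) (@conjcK R)
  (@conjc_real R) (@cReD R) (@cRe_emb R) (@cRe_conj R) (@cRe_ge0 R) (@cRe_pos R)
  (@cemb_re R) (@cre_nd R) d N x Rs d0 hN xnz HR.
case.
- move=> A HA.
  have := opt A HA; rewrite /l_cplx.
  have cpos : 0 < 2 * ((d - 1)%:R / (2 * N)%:R :> R).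
    rewrite mulr_gt0 // divr_gt0 // ltr0n ?muln_gt0 //.
    by rewrite subn_gt0.
  by rewrite !mulNr lerN2 ler_pM2l.
by move=> c c0 e; exists c.
Qed.

Unset Implicit Arguments.

Theorem mainTheorem1 (R : realType) (d N : nat) (hd : (2 <= d)%N) (hN : (0 < N)%N) :
  (* K = R *)
  (forall (x : 'I_N -> 'cV[R]_d) (Rs : 'M[R]_d),
     (forall n, x n != 0) ->
     HPd_real Rs ->
     (forall A : 'M[R]_d, HPd_real A -> l_real x A <= l_real x Rs) ->
     exists2 c : R, 0 < c &
       Rs = c *: \sum_(n < N)
               ((((x n)^T *m invmx Rs *m x n) 0 0)^-1 *: (x n *m (x n)^T)))
  /\
  (* K = C *)
  (forall (x : 'I_N -> 'cV[R[i]]_d) (Rs : 'M[R[i]]_d),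
     (forall n, x n != 0) ->
     HPd_cplx Rs ->
     (forall A : 'M[R[i]]_d, HPd_cplx A -> l_cplx x A <= l_cplx x Rs) ->
     exists2 c : R, 0 < c &
       Rs = (c%:C)%C *: \sum_(n < N)
               (((cadj (x n) *m invmx Rs *m x n) 0 0)^-1 *: (x n *m cadj (x n)))).
Proof.
split; [exact: real_case | exact: cplx_case].
Qed.
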